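(* For every $n\geq1$ and all $N\times N$ real symmetric positive semidefinite matrices $A_{1},\ldots,A_{n},X$, \[ \Delta_{A_{1}}\Delta_{A_{2}}\cdots\Delta_{A_{n}}\det(X)=\sum_{k=0}^{n}(-1)^{n-k}\sum_{1\leq i_{1}<\cdots<i_{k}\leq n}\det(A_{i_{1}}+\cdots+A_{i_{k}}+X)\geq0 \] (the $k=0$ term being $(-1)^n\det X$). In other words, the restriction of $\det$ to the cone of positive semidefinite $N\times N$ real symmetric matrices has positive differences of every order $n\geq0$.
   Context: $(\Delta_{H}f)(X)=f(X+H)-f(X)$. A function $f$ on a convex cone has positive differences of order $n\geq1$ if $\Delta_{H_1}\cdots\Delta_{H_n}f(X)\geq0$ for all $X,H_1,\ldots,H_n$ in the cone, and of order $0$ if $f\geq0$. *)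

(* Defs.v *)
From HB Require Import structures.
From mathcomp Require Import all_boot all_order all_algebra.
From mathcomp Require Import reals.
Set Implicit Arguments. Unset Strict Implicit. Unset Printing Implicit Defensive.
Import Order.TTheory GRing.Theory Num.Theory.
Local Open Scope ring_scope.

Definition Delta (V : zmodType) (R : zmodType) (H : V) (f : V -> R) : V -> R :=
  fun X => f (X + H) - f X.

Fixpoint iterDelta (V : zmodType) (R : zmodType) (n : nat)
    (A : nat -> V) (f : V -> R) : V -> R :=
  match n with
  | 0 => f
  | n'.+1 => Delta (A 0%N) (iterDelta n' (fun i => A i.+1) f)
  end.

Definition psd (R : realType) (N : nat) (M : 'M[R]_N) : Prop :=
  M^T = M /\ forall v : 'cV[R]_N, 0 <= (v^T *m M *m v) 0 0.

(* Main.v *)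
Require Import Defs.
From HB Require Import structures.
From mathcomp Require Import all_boot all_order all_algebra.
From mathcomp Require Import reals.
From mathcomp Require Import ring lra.
Set Implicit Arguments. Unset Strict Implicit. Unset Printing Implicit Defensive.
Import Order.TTheory GRing.Theory Num.Theory.
Local Open Scope ring_scope.

Section Gen.
Variables (V : zmodType) (R : comNzRingType).

Lemma Delta_ext (h : V) (f g : V -> R) : f =1 g -> Delta h f =1 Delta h g.
Proof. by move=> e X; rewrite /Delta !e. Qed.

Lemma iterDelta_ext n (B : nat -> V) (f g : V -> R) :
  f =1 g -> iterDelta n B f =1 iterDelta n B g.
Proof.
elim: n B => [|n IH] B e X //=; exact: Delta_ext (IH _ e) X.
Qed.

Lemma iterDelta_extB n (B C : nat -> V) (f : V -> R) :
  B =1 C -> iterDelta n B f =1 iterDelta n C f.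
Proof.
elim: n B C => [|n IH] B C e X //=.
rewrite /Delta e !(IH (fun i => B i.+1) (fun i => C i.+1)) //.
Qed.

Lemma Delta_comm (a b : V) (g : V -> R) X :
  Delta a (Delta b g) X = Delta b (Delta a g) X.
Proof. rewrite /Delta -!addrA (addrC a b). ring. Qed.

Lemma iterDelta_comm n (B : nat -> V) h (f : V -> R) :
  Delta h (iterDelta n B f) =1 iterDelta n B (Delta h f).
Proof.
elim: n B => [|n IH] B X //=.
rewrite Delta_comm; exact: Delta_ext (IH _) X.
Qed.

Lemma iterDelta_scale n (B : nat -> V) (c : R) (f : V -> R) X :
  iterDelta n B (fun Y => c * f Y) X = c * iterDelta n B f X.
Proof.
elim: n B X => [|n IH] B X //=.
by rewrite /Delta !IH mulrBr.
Qed.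

Lemma Delta_scale h (c : R) (f : V -> R) X :
  Delta h (fun Y => c * f Y) X = c * Delta h f X.
Proof. by rewrite /Delta mulrBr. Qed.

Lemma iterDelta_comp (W : zmodType) (phi : V -> W) n (B : nat -> V) (f : W -> R) X :
  (forall x y, phi (x + y) = phi x + phi y) ->
  iterDelta n B (fun Y => f (phi Y)) X = iterDelta n (fun i => phi (B i)) f (phi X).
Proof.
move=> phiD; elim: n B X => [|n IH] B X //=.
by rewrite /Delta !IH phiD.
Qed.

Lemma Delta0 (g : V -> R) X : Delta 0 g X = 0.
Proof. by rewrite /Delta addr0 subrr. Qed.

Lemma DeltaD a b (g : V -> R) X : Delta (a + b) g X = Delta a g (X + b) + Delta b g X.
Proof. rewrite /Delta (addrC a b) addrA. ring. Qed.

Lemma iterDelta_const n (B : nat -> V) (c : R) X :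
  iterDelta n B (fun _ => c) X = if n is 0 then c else 0.
Proof.
elim: n B X => [|n IH] B X //=.
rewrite /Delta !IH; case: n {IH} => [|n]; by rewrite subrr.
Qed.

End Gen.

Section Psd.
Variable R : realType.

Definition qf N (M : 'M[R]_N) (u w : 'cV[R]_N) := (u^T *m M *m w) 0 0.

Lemma qf_sym N (M : 'M[R]_N) u w : M^T = M -> qf M u w = qf M w u.
Proof.
move=> sM; rewrite /qf -[in LHS](trmxK (u^T *m M *m w)) mxE.
by rewrite !trmx_mul trmxK sM mulmxA.
Qed.

Lemma qf_delta N (M : 'M[R]_N) i j : qf M (delta_mx i 0) (delta_mx j 0) = M i j.
Proof. by rewrite /qf trmx_delta -rowE -colE !mxE. Qed.

Lemma qf_expand N (M : 'M[R]_N) u w s :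
  qf M (u + s *: w) (u + s *: w)
  = qf M u u + s * qf M u w + s * qf M w u + s ^+ 2 * qf M w w.
Proof.
rewrite /qf; have -> : (u + s *: w)^T = u^T + s *: w^T by apply/matrixP => i j; rewrite !mxE.
rewrite !mulmxDl !mulmxDr -!scalemxAl -!scalemxAr !mxE.
ring.
Qed.

Lemma psd_cong m N (P : 'M[R]_(m, N)) M : psd M -> psd (P *m M *m P^T).
Proof.
case=> sM qM; split; first by rewrite !trmx_mul trmxK sM mulmxA.
move=> v; have := qM (P^T *m v).
by rewrite trmx_mul trmxK !mulmxA.
Qed.

Lemma psd0 N : psd (0 : 'M[R]_N).
Proof. by split; [rewrite linear0 | move=> v; rewrite mulmx0 mul0mx mxE]. Qed.

Lemma psdD N (M1 M2 : 'M[R]_N) : psd M1 -> psd M2 -> psd (M1 + M2).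
Proof.
case=> s1 q1 [s2 q2]; split; first by rewrite linearD /= s1 s2.
by move=> v; rewrite mulmxDr mulmxDl mxE addr_ge0.
Qed.

Lemma psd_diag N (M : 'M[R]_N) i : psd M -> 0 <= M i i.
Proof. by case=> _ q; have := q (delta_mx i 0); rewrite -/(qf _ _ _) qf_delta. Qed.

Lemma psd_sym_entry N (M : 'M[R]_N) i j : psd M -> M j i = M i j.
Proof. by case=> s _; rewrite -{1}s mxE. Qed.

Lemma psd_offdiag N (M : 'M[R]_N) i j : psd M -> M i i = 0 -> M i j = 0.
Proof.
move=> pM Mii; apply/eqP/negPn/negP => nz.
case: (pM) => sM q.
pose s := - (M j j + 1) / (2 * M i j).
have := q (delta_mx j 0 + s *: delta_mx i 0).
rewrite -/(qf _ _ _) qf_expand !qf_delta Mii (psd_sym_entry _ _ pM).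
have -> : M j j + s * M i j + s * M i j + s ^+ 2 * 0 = - 1.
  rewrite /s; field; exact: nz.
by rewrite lerNr oppr0 ler10.
Qed.

Lemma psd_zero N (M : 'M[R]_N) : psd M -> (forall i, M i i = 0) -> M = 0.
Proof.
move=> pM d; apply/matrixP => i j; rewrite mxE; exact: psd_offdiag.
Qed.

End Psd.

Section Schur.
Variable R : realType.
Variable N : nat.
Implicit Types h : 'M[R]_N.

Definition schur h k := h - (h k k)^-1 *: (col k h *m (col k h)^T).

Lemma schur_entry h k i j :
  schur h k i j = h i j - (h k k)^-1 * (h i k * h j k).
Proof. by rewrite /schur !mxE big_ord1 !mxE. Qed.

Lemma psd_schur h k : psd h -> h k k != 0 -> psd (schur h k).
Proof.
move=> ph nz; case: (ph) => sh qh; split.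
  rewrite /schur; apply/matrixP => i j; rewrite !mxE !big_ord1 !mxE.
  by rewrite (psd_sym_entry i j ph) [h j k * _]mulrC.
move=> v.
have E : (v^T *m schur h k *m v) 0 0
   = qf h v v - (h k k)^-1 * (qf h v (delta_mx k 0) * qf h v (delta_mx k 0)).
  have L : forall (M1 M2 : 'M[R]_N) a u w, qf (M1 - a *: M2) u w = qf M1 u w - a * qf M2 u w.
    by move=> M1 M2 a u w; rewrite /qf mulmxBr mulmxBl -scalemxAr -scalemxAl !mxE.
  rewrite -/(qf _ _ _) /schur L; congr (_ - _ * _).
  have M1 : forall x y : 'M[R]_1, (x *m y) 0 0 = x 0 0 * y 0 0.
    by move=> x y; rewrite mxE big_ord1.
  rewrite /qf.
  have -> : v^T *m (col k h *m (col k h)^T) *m v = (v^T *m col k h) *m ((col k h)^T *m v) by rewrite !mulmxA.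
  rewrite M1 colE; congr (_ * _).
    by rewrite mulmxA.
  by rewrite trmx_mul sh -/(qf h v (delta_mx k 0)) (qf_sym _ _ sh) /qf ?trmx_delta ?mulmxA.
rewrite E.
pose t := - (qf h v (delta_mx k 0)) / h k k.
have := qh (v + t *: delta_mx k 0).
have eb : qf h (delta_mx k 0) v = qf h v (delta_mx k 0) := qf_sym _ _ sh.
rewrite -/(qf _ _ _) qf_expand qf_delta eb.
suff -> : qf h v v + t * qf h v (delta_mx k 0) + t * qf h v (delta_mx k 0) +
    t ^+ 2 * h k k = qf h v v - (h k k)^-1 * (qf h v (delta_mx k 0) * qf h v (delta_mx k 0)) by [].
rewrite /t; field; exact: nz.
Qed.

End Schur.

Section Main.
Variable R : realType.

Definition cnt N (h : 'M[R]_N) := #|[set i | h i i != 0]|.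

Lemma schur_decomp N (h : 'M[R]_N) k :
  h = (h k k)^-1 *: (col k h *m (col k h)^T) + schur h k.
Proof. by rewrite /schur addrC subrK. Qed.

Lemma Delta_comp (V W : zmodType) (phi : V -> W) n (B : nat -> V) (f : W -> R) h X :
  (forall x y, phi (x + y) = phi x + phi y) ->
  Delta (phi h) (iterDelta n (fun i => phi (B i)) f) (phi X)
  = Delta h (iterDelta n B (fun Y => f (phi Y))) X.
Proof. by move=> phiD; rewrite /Delta -phiD !(@iterDelta_comp _ _ _ phi n B f _ phiD). Qed.

Lemma cnt_schur N (h : 'M[R]_N) k : psd h -> h k k != 0 -> (cnt (schur h k) < cnt h)%N.
Proof.
move=> ph nz; apply: proper_card; apply/properP; split.
  apply/subsetP => i; rewrite !inE schur_entry; apply: contra => /eqP hii.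
  by rewrite hii (psd_offdiag k ph hii) mul0r mulr0 subrr.
exists k; rewrite !inE ?nz //= schur_entry.
by rewrite mulKf // subrr eqxx.
Qed.

Lemma Delta_E N' (b : R) (W : 'M[R]_N'.+1) :
  Delta (b *: delta_mx 0 0) (fun M => \det M) W = b * \det (row' 0 (col' 0 W)).
Proof.
rewrite /Delta (expand_det_row _ 0) [\det W](expand_det_row _ 0) -sumrB.
have cofE : forall j, cofactor (W + b *: delta_mx 0 0) 0 j = cofactor W 0 j.
  move=> j; rewrite /cofactor; congr (_ * \det _); apply/matrixP => i' j'.
  by rewrite !mxE eq_sym (negbTE (neq_lift _ _)) /= mulr0 addr0.
under eq_bigr do rewrite cofE [X in X * _]mxE mulrDl addrAC subrr add0r.
rewrite big_ord_recl big1 ?addr0.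
  by rewrite !mxE eqxx /= mulr1 /cofactor /= expr0 mul1r.
by move=> j _; rewrite !mxE eq_sym (negbTE (neq_lift _ _)) /= mulr0 mul0r.
Qed.

Lemma sub_cong N' (W : 'M[R]_N'.+1) :
  row' 0 (col' 0 W) = row' 0 1%:M *m W *m (row' 0 1%:M)^T.
Proof.
have r : forall m (X : 'M[R]_(N'.+1, m)), row' 0 X = row' 0 1%:M *m X.
  by move=> m X; exact: rowsubE.
rewrite r -mulmxA; congr (_ *m _).
by rewrite -[col' 0 W]trmxK tr_col' r trmx_mul trmxK.
Qed.


Definition Pos N := forall n (B : nat -> 'M[R]_N) X, (forall i, psd (B i)) -> psd X ->
  0 <= iterDelta n B (fun M => \det M) X.

Lemma cong_add m N (P : 'M[R]_(m, N)) (x y : 'M[R]_N) :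
  P *m (x + y) *m P^T = P *m x *m P^T + P *m y *m P^T.
Proof. by rewrite mulmxDr mulmxDl. Qed.

Lemma rank_one N' (IH : Pos N') n (B : nat -> 'M[R]_N'.+1) (Y : 'M[R]_N'.+1)
    (c : 'cV[R]_N'.+1) (a : R) :
  0 <= a -> c != 0 -> (forall i, psd (B i)) -> psd Y ->
  0 <= Delta (a *: (c *m c^T)) (iterDelta n B (fun M => \det M)) Y.
Proof.
move=> a0 c0 pB pY.
set L := col_ebase c; have Lu : L \in unitmx := col_ebase_unit c.
have rc : \rank c = 1%N.
  apply/eqP; rewrite eqn_leq rank_leq_col lt0n mxrank_eq0; exact: c0.
set U := row_ebase c.
set d : 'cV[R]_N'.+1 := pid_mx 1 *m U.
have ce : c = L *m d by rewrite /d mulmxA -{1}(mulmx_ebase c) rc.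
set G := a *: (d *m d^T).
set b := a * (U 0 0 * U 0 0).
have GE : G = b *: delta_mx 0 0.
  apply/matrixP => i j; rewrite /G /b !mxE big_ord1 !mxE !big_ord1 !mxE.
  case: i => [[|i] Hi]; case: j => [[|j] Hj] /=; rewrite ?mul1r ?mul0r ?mulr0 ?mulr1 //.
have b0 : 0 <= b by rewrite /b mulr_ge0 // -expr2 sqr_ge0.
pose phi := fun Z : 'M[R]_N'.+1 => L *m Z *m L^T.
pose P := invmx L.
pose psi := fun Z : 'M[R]_N'.+1 => P *m Z *m P^T.
have phiD : forall x y, phi (x + y) = phi x + phi y by move=> x y; exact: cong_add.
have phipsi : forall Z, phi (psi Z) = Z.
  move=> Z; rewrite /phi /psi !mulmxA mulmxV // mul1mx -mulmxA -trmx_mul mulmxV //.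
  by rewrite trmx1 mulmx1.
have acE : a *: (c *m c^T) = phi G.
  by rewrite /phi /G ce trmx_mul -scalemxAr -scalemxAl !mulmxA.
have detphi : forall Z, \det (phi Z) = \det L ^+ 2 * \det Z.
  by move=> Z; rewrite /phi !det_mulmx det_tr expr2 mulrAC.
rewrite acE.
have -> : Delta (phi G) (iterDelta n B (fun M => \det M)) Y
   = Delta (phi G) (iterDelta n (fun i => phi (psi (B i))) (fun M => \det M)) (phi (psi Y)).
  rewrite phipsi; apply: Delta_ext => Z; apply: iterDelta_extB => i; by rewrite phipsi.
rewrite (@Delta_comp _ _ phi n (fun i => psi (B i)) (fun M => \det M) G (psi Y) phiD).
rewrite (Delta_ext _ (iterDelta_ext _ _ detphi)).
rewrite (Delta_ext _ (fun Z => iterDelta_scale _ _ _ _ Z)) Delta_scale.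
apply: mulr_ge0; first exact: sqr_ge0.
rewrite iterDelta_comm.
have -> : iterDelta n (fun i => psi (B i)) (Delta G (fun M => \det M)) (psi Y)
   = iterDelta n (fun i => psi (B i)) (fun W => b * \det (row' 0 (col' 0 W))) (psi Y).
  by apply: iterDelta_ext => W; rewrite GE Delta_E.
rewrite iterDelta_scale; apply: mulr_ge0 => //.
have -> : iterDelta n (fun i => psi (B i)) (fun W => \det (row' 0 (col' 0 W))) (psi Y)
   = iterDelta n (fun i => psi (B i)) (fun W => \det (row' 0 1%:M *m W *m (row' 0 1%:M)^T)) (psi Y).
  by apply: iterDelta_ext => W; rewrite sub_cong.
rewrite (@iterDelta_comp _ _ _ (fun W => row' 0 1%:M *m W *m (row' 0 1%:M)^T)); last first.
  by move=> x y; exact: cong_add.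
apply: IH => [i|]; apply: psd_cong; [apply: psd_cong; exact: pB | apply: psd_cong; exact: pY].
Qed.

Lemma cons_pos N' (IH : Pos N') n (B : nat -> 'M[R]_N'.+1) :
  (forall i, psd (B i)) -> forall m (h X : 'M[R]_N'.+1), (cnt h <= m)%N -> psd h -> psd X ->
  0 <= Delta h (iterDelta n B (fun M => \det M)) X.
Proof.
move=> pB m; elim: m => [|m IHm] h X hm ph pX; case: (posnP (cnt h)) => [c0|cpos].
- have -> : h = 0.
    apply: psd_zero => // i; apply/eqP/negPn/negP => nz.
    by move: c0 => /eqP; rewrite cards_eq0 => /eqP/setP/(_ i); rewrite !inE nz.
  by rewrite Delta0.
- by move: hm; rewrite leqn0 => /eqP; move: cpos => /[swap] ->.
- have -> : h = 0.
    apply: psd_zero => // i; apply/eqP/negPn/negP => nz.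
    by move: c0 => /eqP; rewrite cards_eq0 => /eqP/setP/(_ i); rewrite !inE nz.
  by rewrite Delta0.
have /card_gt0P [k] := cpos; rewrite inE => nz.
rewrite (schur_decomp h k) DeltaD; apply: addr_ge0.
  apply: rank_one => //.
  - by rewrite invr_ge0 psd_diag.
  - by apply/eqP => /matrixP/(_ k 0); rewrite !mxE; apply/eqP.
  - exact: psdD pX (psd_schur ph nz).
apply: IHm => //; last exact: psd_schur.
by rewrite -ltnS; apply: leq_trans hm; apply: cnt_schur.
Qed.

Lemma Pos_all N : Pos N.
Proof.
elim: N => [|N' IH].
  move=> n B X _ _; rewrite (iterDelta_ext _ _ (fun M => det_mx00 M)) iterDelta_const.
  by case: n.
move=> [|n] B X pB pX.
  change (0 <= \det X); have -> : \det X = Delta X (iterDelta 0 B (fun M => \det M)) 0.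
    by rewrite /Delta /= add0r det0 subr0.
  apply: (@cons_pos N' IH 0 B pB (cnt X) X 0 (leqnn _) pX); exact: psd0.
exact: (@cons_pos N' IH n (fun i => B i.+1) (fun i => pB i.+1) _ (B 0%N) X (leqnn _) (pB 0%N) pX).
Qed.
End Main.

Section Sum.
Variables (V : zmodType) (R : comNzRingType).

Lemma split_in n (F : {set 'I_n.+1} -> R) :
  \sum_(T : {set 'I_n.+1} | ord0 \in T) F T = \sum_(S' : {set 'I_n}) F (ord0 |: [set lift ord0 i | i in S']).
Proof.
rewrite (reindex_onto (fun S' : {set 'I_n} => ord0 |: [set lift ord0 i | i in S'])
                      (fun T => [set i | lift ord0 i \in T])).
  apply: eq_bigl => S'; rewrite !inE eqxx /=; apply/eqP/setP => i.
  by rewrite !inE (eq_sym (lift _ _)) (negbTE (neq_lift _ _)) /= mem_imset //; exact: lift_inj.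
move=> T T0; apply/setP => i; rewrite !inE.
case: (unliftP ord0 i) => [j|] ->; last by rewrite eqxx T0.
rewrite (eq_sym (lift _ _)) (negbTE (neq_lift _ _)) /= mem_imset ?inE //; exact: lift_inj.
Qed.

Lemma split_out n (F : {set 'I_n.+1} -> R) :
  \sum_(T : {set 'I_n.+1} | ord0 \notin T) F T = \sum_(S' : {set 'I_n}) F [set lift ord0 i | i in S'].
Proof.
rewrite (reindex_onto (fun S' : {set 'I_n} => [set lift ord0 i | i in S'])
                      (fun T => [set i | lift ord0 i \in T])).
  apply: eq_bigl => S'; apply/andP; split.
    by apply/imsetP => -[j _] /eqP; rewrite (negbTE (neq_lift _ _)).
  apply/eqP/setP => i; rewrite !inE mem_imset //; exact: lift_inj.
move=> T T0; apply/setP => i.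
case: (unliftP ord0 i) => [j|] ->; last first.
  by rewrite (negbTE T0); apply/imsetP => -[j _] /eqP; rewrite (negbTE (neq_lift _ _)).
rewrite mem_imset ?inE //; exact: lift_inj.
Qed.


Lemma iterDelta_sum n (B : nat -> V) (f : V -> R) X :
  iterDelta n B f X = \sum_(T : {set 'I_n}) (-1) ^+ (n - #|T|) * f (\sum_(i in T) B i + X).
Proof.
elim: n B X => [|n IH] B X.
  rewrite (big_pred1 set0) /=; last by move=> T; symmetry; apply/eqP/setP => -[].
  by rewrite big_set0 add0r cards0 expr0 mul1r.
rewrite [LHS]/= /Delta !IH (bigID (fun T : {set 'I_n.+1} => ord0 \in T)) /=.
rewrite split_in split_out -big_split /= -sumrB; apply: eq_bigr => T _.
have n0 : ord0 \notin [set lift ord0 i | i in T].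
  by apply/imsetP => -[j _] /eqP; rewrite (negbTE (neq_lift _ _)).
have li : {in T &, injective (lift (@ord0 n))} by move=> x y _ _; exact: lift_inj.
rewrite cardsU1 n0 card_imset; last exact: lift_inj.
rewrite big_setU1 //= !big_imset //=.
have Tn : (#|T| <= n)%N by rewrite -[X in (_ <= X)%N](card_ord n) max_card.
rewrite add1n subSS (subSn Tn) exprS mulN1r mulNr.
have e2 : \sum_(i in T) B i.+1 = \sum_(i in T) B (bump 0 i) by [].
rewrite e2 [X + _]addrC addrA [_ + B 0%N]addrC; ring.
Qed.
End Sum.

Unset Implicit Arguments.
Set Strict Implicit.

Theorem theorem5p6 (R : realType) (N n : nat) (A : 'I_n -> 'M[R]_N)
    (X : 'M[R]_N) :
  (1 <= n)%N ->
  (forall i, psd (A i)) -> psd X ->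
  let Af := fun k : nat => match insub k with Some i => A i | None => 0 end in
  iterDelta n Af (fun M : 'M[R]_N => \det M) X
    = \sum_(S : {set 'I_n}) (-1) ^+ (n - #|S|)
          * \det (\sum_(i in S) A i + X)
  /\ 0 <= iterDelta n Af (fun M : 'M[R]_N => \det M) X.
Proof.
move=> _ pA pX Af; split.
  rewrite iterDelta_sum; apply: eq_bigr => T _; congr (_ * \det (_ + _)).
  by apply: eq_bigr => i _; rewrite /Af valK.
apply: Pos_all => // k; rewrite /Af; case: insub => [i|]; [exact: pA | exact: psd0].
Qed.
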